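(* Let $k\ge 2$. There exist hypercube deliberation spaces with arbitrarily large numbers $n$ of agents in which a deliberation may take $\Omega(2^{\sqrt{n}/2})$ $k$-compromise transitions. That is, there are a constant $c>0$ and, for arbitrarily large $n$, a hypercube deliberation space with $n$ agents, an initial coalition structure, and a sequence of at least $c\,2^{\sqrt{n}/2}$ consecutive $k$-compromise transitions starting from that structure.
   Context: A hypercube deliberation space of dimension $d$ consists of the proposal set $\{0,1\}^d$, a finite multiset of $n$ agents, each a point of $\{0,1\}^d$, and the Hamming distance $\rho$; the status quo is $\mathbf{0}$. An agent $v$ supports a proposal $p$ if $\rho(v,p)<\rho(v,\mathbf{0})$. A coalition is a pair $(C,p)$ where $C$ is a set of agents and $p$ is a proposal supported by all agents of $C$. A coalition structure is a partition of the agents into coalitions. A $k$-compromise transition from a coalition structure is the following move. Take at most $k$ of its coalitions $(C_1,p_1),\dots,(C_\ell,p_\ell)$ with $\ell\le k$, a set $S\subseteq C_1\cup\dots\cup C_\ell$ meeting each $C_i$, and a proposal $p$ supported by all agents of $S$ with $|S|>|C_i|$ for every $i$. The agents of $S$ leave their coalitions and form the coalition $(S,p)$. A deliberation is a sequence of such transitions. *)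

(* Defs.v *)
From Stdlib Require Import Reals.
From mathcomp Require Import all_boot.

Set Implicit Arguments.
Unset Strict Implicit.
Unset Printing Implicit Defensive.

Definition proposal (d : nat) := {ffun 'I_d -> bool}.

Definition status_quo (d : nat) : proposal d := [ffun _ => false].

Definition hamming (d : nat) (u v : proposal d) : nat := #|[set i | u i != v i]|.

Definition supports (d : nat) (v p : proposal d) : bool :=
  hamming v p < hamming v (status_quo d).

(* Agents are indexed by 'I_n; pos gives their location (a multiset of n points). *)
Definition coalition (n d : nat) := ({set 'I_n} * proposal d)%type.

Definition is_coalition (n d : nat) (pos : 'I_n -> proposal d) (x : coalition n d) : bool :=
  [forall i in x.1, supports (pos i) x.2].

Definition is_coalition_structure (n d : nat) (pos : 'I_n -> proposal d)
    (CS : {set coalition n d}) : Prop :=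
  partition [set x.1 | x in CS] [set: 'I_n]
  /\ {in CS &, forall x y, x.1 = y.1 -> x = y}
  /\ (forall x, x \in CS -> is_coalition pos x).

(* A k-compromise transition from CS to CS'. T is the set of (at most k, at least
   one) chosen coalitions of CS; S the deviating agents, p their new proposal. *)
Definition k_compromise_step (n d : nat) (pos : 'I_n -> proposal d) (k : nat)
    (CS CS' : {set coalition n d}) : Prop :=
  exists (T : {set coalition n d}) (S : {set 'I_n}) (p : proposal d),
    T \subset CS /\ 0 < #|T| <= k /\
    S \subset \bigcup_(x in T) x.1 /\
    (forall x, x \in T -> (S :&: x.1 != set0) /\ (#|x.1| < #|S|)) /\
    (forall i, i \in S -> supports (pos i) p) /\
    CS' = (S, p) |: [set ((x.1 :\: S), x.2) | x in CS & x.1 :\: S != set0].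

(* Main.v *)
Require Import Defs.
From Stdlib Require Import Reals.
From Stdlib Require Import Lra.
From mathcomp Require Import all_boot zify.

Set Implicit Arguments.
Unset Strict Implicit.
Unset Printing Implicit Defensive.

Definition ptrue : proposal 1 := [ffun _ => true].
Definition posT (n : nat) : 'I_n -> proposal 1 := fun _ => ptrue.
Definition CSof (n : nat) (P : {set {set 'I_n}}) : {set coalition n 1} :=
  [set (C, ptrue) | C in P].
Definition part (n : nat) (P : {set {set 'I_n}}) := partition P [set: 'I_n].

Lemma supports_true : supports ptrue ptrue.
Proof.
rewrite /supports /hamming.
have -> : [set i | ptrue i != ptrue i] = set0.
  by apply/setP => i; rewrite !inE eqxx.
have -> : [set i | ptrue i != status_quo 1 i] = setT.
  by apply/setP => i; rewrite !inE /ptrue /status_quo !ffunE.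
by rewrite cards0 cardsT card_ord.
Qed.

Lemma CSof_fst (n : nat) (P : {set {set 'I_n}}) : [set x.1 | x in CSof P] = P.
Proof.
rewrite /CSof -imset_comp.
apply/setP => C; apply/imsetP/idP => [[D HD ->] //| HC]; by exists C.
Qed.

Lemma CSof_cs (n : nat) (P : {set {set 'I_n}}) : part P -> is_coalition_structure (@posT n) (CSof P).
Proof.
move=> HP; split; first by rewrite CSof_fst.
split.
  move=> x y /imsetP [C HC ->] /imsetP [D HD ->] /= ->; done.
move=> x /imsetP [C HC ->]; apply/forallP => i; apply/implyP => _.
exact: supports_true.
Qed.
Definition stepP (n : nat) (P P' : {set {set 'I_n}}) :=
  exists (A B S : {set 'I_n}), A \in P /\ B \in P /\ A != B /\
    S \subset A :|: B /\ S :&: A != set0 /\ S :&: B != set0 /\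
    #|A| < #|S| /\ #|B| < #|S| /\
    P' = S |: [set C :\: S | C in P & C :\: S != set0].

Lemma step_kc (n k : nat) (P P' : {set {set 'I_n}}) : 2 <= k -> stepP P P' ->
  k_compromise_step (@posT n) k (CSof P) (CSof P').
Proof.
move=> hk [A [B [S [HA [HB [HAB [HS [HSA [HSB [hA [hB ->]]]]]]]]]]].
exists [set (A, ptrue); (B, ptrue)], S, ptrue.
split.
  apply/subsetP => x /set2P [] ->; apply/imsetP; [exists A | exists B]; done.
split.
  rewrite cards2.
  have -> : ((A, ptrue) != (B, ptrue)) by rewrite xpair_eqE negb_and HAB.
  by [].
split.
  apply/subsetP => z zS.
  move/subsetP: HS => /(_ z zS); rewrite inE => /orP [zA|zB]; apply/bigcupP.
    by exists (A, ptrue) => //; rewrite !inE eqxx.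
  by exists (B, ptrue) => //; rewrite !inE eqxx orbT.
split.
  by move=> x /set2P [] -> /=.
split.
  by move=> i _; exact: supports_true.
rewrite /CSof imsetU1; congr (_ |: _).
apply/setP => y; apply/imsetP/imsetP.
  move=> [D /imsetP [C] ]; rewrite inE => /andP [HC HCS] -> ->.
  exists (C, ptrue) => //; rewrite inE /= HCS andbT; apply/imsetP; by exists C.
move=> [x]; rewrite inE => /andP [/imsetP [C HC ->]] /= HCS ->.
exists (C :\: S) => //; apply/imsetP; exists C => //; by rewrite inE HC HCS.
Qed.
Definition cnt (n : nat) (P : {set {set 'I_n}}) (k : nat) : nat :=
  \sum_(C in P) (#|C| == k).

Lemma sum_bool_ex (T : finType) (p : pred T) (f : T -> bool) :
  0 < \sum_(C | p C) (f C : nat) -> exists C, p C && f C.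
Proof.
case: (pickP (fun C => p C && f C)) => [C HC _| none]; first by exists C.
rewrite big1 // => C HC; have := none C; rewrite HC /= => ->; done.
Qed.

Lemma cnt_ex1 (n : nat) (P : {set {set 'I_n}}) k :
  0 < cnt P k -> exists2 A, A \in P & #|A| = k.
Proof.
move=> /sum_bool_ex [C /andP [HC /eqP HCk]]; by exists C.
Qed.

Lemma cnt_ex2 (n : nat) (P : {set {set 'I_n}}) a b :
  1 + (a == b) <= cnt P a -> 0 < cnt P b ->
  exists A B, [/\ A \in P, B \in P, A != B, #|A| = a & #|B| = b].
Proof.
move=> Ha /cnt_ex1 [B HB HBb].
move: Ha; rewrite /cnt (bigD1 B) //= HBb => Ha.
have : 0 < \sum_(i in P | i != B) (#|i| == a).
  move: Ha; case: (eqVneq a b) => [->|Hab]; rewrite ?eqxx /=; first lia.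
  move=> H; lia.
move=> /sum_bool_ex [A /andP [/andP [HA HAB] /eqP HAa]].
by exists A, B.
Qed.

Lemma sub_card (T : finType) (A : {set T}) m :
  m <= #|A| -> exists2 S : {set T}, S \subset A & #|S| = m.
Proof.
move=> Hm; exists [set z in take m (enum A)].
  by apply/subsetP => z; rewrite inE => /mem_take; rewrite mem_enum.
rewrite cardsE; have U : uniq (take m (enum A)) by rewrite take_uniq ?enum_uniq.
rewrite (card_uniqP U) size_takel //; by rewrite -cardE.
Qed.
Lemma arith_key (a b c d e R : nat) : c + (a + (b + R)) + d + e = d + (e + R) + c + a + b.
Proof. lia. Qed.

Lemma move_lemma (n : nat) (P : {set {set 'I_n}}) (A B : {set 'I_n}) (x y : nat) :
  part P -> A \in P -> B \in P -> A != B ->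
  0 < x <= #|A| -> 0 < y <= #|B| -> #|A| < x + y -> #|B| < x + y ->
  exists P', [/\ stepP P P', part P' &
    forall k, cnt P' k + (#|A| == k) + (#|B| == k) =
      cnt P k + (x + y == k) + ((0 < #|A| - x) && (#|A| - x == k))
              + ((0 < #|B| - y) && (#|B| - y == k))].
Proof.
move=> HP HA HB HAB /andP [x0 xA] /andP [y0 yB] hA hB.
have HP' := HP; move/and3P: HP' => [/eqP Hcov Htriv H0].
have dAB : [disjoint A & B] by exact: (trivIsetP Htriv A B HA HB HAB).
have [SA SAA cSA] := sub_card xA.
have [SB SBB cSB] := sub_card yB.
set S := SA :|: SB.
have dSAB : SA :&: SB = set0.
  apply/eqP; rewrite setI_eq0; exact: (disjointWl SAA (disjointWr SBB dAB)).
have cS : #|S| = x + y by rewrite cardsU dSAB cards0 cSA cSB subn0.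
have SAB : S \subset A :|: B by rewrite setUSS.
have SA_A : S :&: A = SA.
  apply/setP => z; rewrite !inE; apply/idP/idP.
    move=> /andP [/orP [//|zB] zA].
    by move: (disjointFr dAB zA); rewrite (subsetP SBB z zB).
  by move=> zSA; rewrite zSA (subsetP SAA z zSA).
have SB_B : S :&: B = SB.
  apply/setP => z; rewrite !inE; apply/idP/idP.
    move=> /andP [/orP [zA|//] zB].
    by move: (disjointFl dAB zB); rewrite (subsetP SAA z zA).
  by move=> zSB; rewrite zSB orbT (subsetP SBB z zSB).
have cAS : #|A :\: S| = #|A| - x by rewrite cardsD setIC SA_A cSA.
have cBS : #|B :\: S| = #|B| - y by rewrite cardsD setIC SB_B cSB.
have S0 : S != set0 by rewrite -card_gt0 cS addn_gt0 x0.
have other : forall C, C \in P -> C != A -> C != B -> C :\: S = C.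
  move=> C HC HCA HCB; apply/setDidPl.
  have dCA := trivIsetP Htriv C A HC HA HCA.
  have dCB := trivIsetP Htriv C B HC HB HCB.
  rewrite -setI_eq0; apply/eqP/setP => z; rewrite [in RHS]inE in_setI; apply/negbTE/negP => /andP [zC zS].
  move/subsetP: SAB => /(_ z zS); rewrite inE => /orP [zA|zB].
    by move: (disjointFr dCA zC); rewrite zA.
  by move: (disjointFr dCB zC); rewrite zB.
have nonempty : forall C, C \in P -> C != set0.
  by move=> C HC; apply/eqP => E; move: H0; rewrite -E HC.
set Q := [set C :\: S | C in P & C :\: S != set0].
have SQ : S \notin Q.
  apply/imsetP => [[C _ E]].
  move/negP: S0; apply; apply/eqP/setP => z; rewrite in_set0; apply/negbTE/negP => zS.
  have : z \in C :\: S by rewrite -E.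
  by rewrite in_setD zS.
have injQ : {in [pred C | (C \in P) && (C :\: S != set0)] &, injective (fun C => C :\: S)}.
  move=> C1 C2; rewrite !inE => /andP [H1 N1] /andP [H2 N2] E.
  apply/eqP; apply/negPn/negP => N12.
  have d12 := trivIsetP Htriv C1 C2 H1 H2 N12.
  case/set0Pn: N1 => z zC1S.
  have zC2S : z \in C2 :\: S by rewrite -E.
  move: zC1S zC2S; rewrite !inE => /andP [_ zC1] /andP [_ zC2].
  by move: (disjointFr d12 zC1); rewrite zC2.
exists (S |: Q); split.
- exists A, B, S.
  have H1 : S :&: A != set0 by rewrite SA_A -card_gt0 cSA.
  have H2 : S :&: B != set0 by rewrite SB_B -card_gt0 cSB.
  have H3 : #|A| < #|S| by rewrite cS.
  have H4 : #|B| < #|S| by rewrite cS.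
  by repeat split.
- have dSQ : forall D, D \in Q -> [disjoint S & D].
    move=> D /imsetP [C _ ->]; rewrite -setI_eq0; apply/eqP/setP => z.
    rewrite in_set0 !in_setI in_setD; by case: (z \in S).
  have Q0 : set0 \notin Q.
    apply/imsetP => [[C]]; rewrite inE => /andP [_ HCS] E.
    by move: HCS; rewrite -E eqxx.
  apply/and3P; split.
  + apply/eqP/setP => z; rewrite inE; apply/bigcupP.
    case: (boolP (z \in S)) => zS; first by exists S; rewrite ?setU11.
    have : z \in cover P by rewrite Hcov inE.
    move/bigcupP => [C HC zC].
    have zCS : z \in C :\: S by rewrite in_setD zS zC.
    exists (C :\: S) => //; apply/setU1r; apply/imsetP; exists C => //.
    by rewrite inE HC; apply/set0Pn; exists z.
  + apply/trivIsetP => D1 D2; rewrite !in_setU1 => /orP [/eqP->|HD1] /orP [/eqP->|HD2] N.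
    * by rewrite eqxx in N.
    * exact: dSQ.
    * rewrite disjoint_sym; exact: dSQ.
    * move: HD1 HD2 N => /imsetP [C1]; rewrite inE => /andP [H1 _] -> /imsetP [C2]; rewrite inE => /andP [H2 _] -> N.
      have N12 : C1 != C2 by apply: contraNneq N => ->.
      have d12 := trivIsetP Htriv C1 C2 H1 H2 N12.
      exact: (disjointWl (subsetDl C1 S) (disjointWr (subsetDl C2 S) d12)).
  + by rewrite in_setU1 negb_or eq_sym S0 Q0.
- move=> k.
  have E1 : cnt (S |: Q) k = (#|S| == k) + \sum_(D in Q) (#|D| == k).
    by rewrite /cnt big_setU1.
  have E2 : \sum_(D in Q) (#|D| == k) = \sum_(C in P) ((C :\: S != set0) && (#|C :\: S| == k)).
    rewrite big_imset /=.
    rewrite [LHS]big_mkcond [RHS]big_mkcond; apply: eq_bigr => C _.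
    by rewrite inE; case: (C \in P); case: (C :\: S != set0).
    move=> C1 C2 H1 H2; apply: injQ; rewrite inE; [move: H1|move: H2]; rewrite inE //.
  have E3 : cnt P k = (#|A| == k) + ((#|B| == k) +
      \sum_(C in P | (C != A) && (C != B)) (#|C| == k)).
    rewrite /cnt (bigD1 A) //= (bigD1 B) /=; last by rewrite HB eq_sym HAB.
    congr (_ + (_ + _)); apply: eq_bigl => C; by rewrite andbA.
  have E4 : \sum_(C in P) ((C :\: S != set0) && (#|C :\: S| == k)) =
      ((A :\: S != set0) && (#|A :\: S| == k)) + (((B :\: S != set0) && (#|B :\: S| == k)) +
      \sum_(C in P | (C != A) && (C != B)) (#|C| == k)).
    rewrite (bigD1 A) //= (bigD1 B) /=; last by rewrite HB eq_sym HAB.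
    congr (_ + (_ + _)).
    rewrite [RHS](eq_bigl (fun i => (i \in P) && (i != A) && (i != B))); last by move=> i; rewrite andbA.
    apply: eq_bigr => C /andP [/andP [HC HCA] HCB].
    by rewrite (other C HC HCA HCB) (nonempty C HC).
  rewrite E1 E2 E4 E3 cS -!card_gt0 cAS cBS.
  exact: arith_key.
Qed.

Definition chain (n : nat) (P Q : {set {set 'I_n}}) (m : nat) :=
  exists g : nat -> {set {set 'I_n}}, [/\ g 0 = P, g m = Q &
    forall i, i < m -> part (g i) /\ stepP (g i) (g i.+1)].

Lemma chain0 (n : nat) (P : {set {set 'I_n}}) : chain P P 0.
Proof. by exists (fun _ => P). Qed.

Lemma chain_trans (n : nat) (P Q R : {set {set 'I_n}}) a b :
  chain P Q a -> chain Q R b -> chain P R (a + b).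
Proof.
move=> [g1 [g10 g1a H1]] [g2 [g20 g2b H2]].
exists (fun i => if i <= a then g1 i else g2 (i - a)); split.
- by rewrite leq0n.
- case: ifP => h.
    have b0 : b = 0 by lia.
    subst b; by rewrite addn0 g1a -g2b g20.
  by rewrite addKn.
- move=> i hi.
  case: (ltnP i a) => hia.
    have -> : i <= a by lia.
    rewrite ?hia.
    exact: H1.
  have hi' : i - a < b by lia.
  case: (eqVneq i a) => [->|nia].
    rewrite leqnn /= g1a -g20 subSnn.
    apply: H2; lia.
  have h1 : (i <= a) = false by lia.
  have h2 : (i.+1 <= a) = false by lia.
  rewrite h1 ?h2 subSn //; apply: H2; lia.
Qed.

Lemma move_chain (n : nat) (P : {set {set 'I_n}}) (A B : {set 'I_n}) (x y : nat) :
  part P -> A \in P -> B \in P -> A != B ->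
  0 < x <= #|A| -> 0 < y <= #|B| -> #|A| < x + y -> #|B| < x + y ->
  exists P', [/\ chain P P' 1, part P' &
    forall k, cnt P' k + (#|A| == k) + (#|B| == k) =
      cnt P k + (x + y == k) + ((0 < #|A| - x) && (#|A| - x == k))
              + ((0 < #|B| - y) && (#|B| - y == k))].
Proof.
move=> HP HA HB HAB hx hy h1 h2.
have [P' [HS HP' E]] := move_lemma HP HA HB HAB hx hy h1 h2.
exists P'; split => //.
exists (fun i => if i == 0 then P else P'); split => //.
by move=> i; rewrite ltnS leqn0 => /eqP ->.
Qed.

Fixpoint U (i : nat) : nat :=
  match i with
  | 0 => 0
  | S n => match n with 0 => 1 | S j => (U j + U n).+1 end
  end.

Lemma up_lemma (i : nat) : 0 < i -> forall (n : nat) (P : {set {set 'I_n}}), part P ->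
  (forall k, 0 < k <= i -> 0 < cnt P k) -> 1 < cnt P i ->
  exists Q, [/\ part Q, chain P Q (U i) &
    forall k, cnt Q k + (i == k) + (1 == k) = cnt P k + (i.+1 == k)].
Proof.
elim/ltn_ind: i => i IH i0 n P HP Hk Hi.
case: i IH i0 Hk Hi => [//|[|i]] IH _ Hk Hi.
-
  have [A [B [HA HB HAB cA cB]]] : exists A B, [/\ A \in P, B \in P, A != B, #|A| = 1 & #|B| = 1].
    apply: cnt_ex2; rewrite ?eqxx //; lia.
  have [Q [HC HQ E]] := move_chain (x := 1) (y := 1) HP HA HB HAB
    (ltac:(by rewrite cA)) (ltac:(by rewrite cB)) (ltac:(by rewrite cA)) (ltac:(by rewrite cB)).
  exists Q; split => // k; have := E k; rewrite cA cB subnn /=; lia.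
-
  have [A [B [HA HB HAB cA cB]]] : exists A B, [/\ A \in P, B \in P, A != B, #|A| = i.+2 & #|B| = i.+2].
    apply: cnt_ex2; rewrite ?eqxx //; try lia; apply: Hk; lia.
  have [P1 [HC1 HP1 E1]] := move_chain (x := 2) (y := i.+1) HP HA HB HAB
    (ltac:(rewrite cA; lia)) (ltac:(rewrite cB; lia)) (ltac:(rewrite cA; lia)) (ltac:(rewrite cB; lia)).
  move: E1; rewrite cA cB => E1.
  have c1 : forall k, cnt P1 k + (i.+2 == k) + (i.+2 == k) =
      cnt P k + (i.+3 == k) + ((0 < i) && (i == k)) + (1 == k).
    move=> k; have := E1 k.
    have -> : i.+2 - 2 = i by lia.
    have -> : i.+2 - i.+1 = 1 by lia.
    lia.
  case: i IH Hk Hi cA cB E1 c1 => [|i] IH Hk Hi cA cB _ c1.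
  +
    have a1 : forall k, 0 < k <= 1 -> 0 < cnt P1 k.
      move=> k /andP [k0 k1]; have -> : k = 1 by lia.
      have := c1 1; have := Hk 1; lia.
    have a2 : 1 < cnt P1 1 by have := c1 1; have := Hk 1; lia.
    have [Q [HQ HC E]] := IH 1 (ltac:(done)) (ltac:(done)) n P1 HP1 a1 a2.
    exists Q; split => //.
      by have := chain_trans HC1 HC.
    move=> k; have := E k; have := c1 k; lia.
  +
    have b1 : forall k, 0 < k <= i.+1 -> 0 < cnt P1 k.
      move=> k /andP [k0 k1]; have := c1 k; have := Hk k; lia.
    have b2 : 1 < cnt P1 i.+1 by have := c1 i.+1; have := Hk i.+1; lia.
    have [P2 [HP2 HC2 E2]] := IH i.+1 (ltac:(lia)) (ltac:(done)) n P1 HP1 b1 b2.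
    have b3 : forall k, 0 < k <= i.+2 -> 0 < cnt P2 k.
      move=> k /andP [k0 k1]; have := E2 k; have := c1 k; have := Hk k; lia.
    have b4 : 1 < cnt P2 i.+2 by have := E2 i.+2; have := c1 i.+2; have := Hk i.+2; lia.
    have [Q [HQ HC E]] := IH i.+2 (ltac:(lia)) (ltac:(done)) n P2 HP2 b3 b4.
    exists Q; split => //.
      have := chain_trans HC1 (chain_trans HC2 HC).
      by rewrite /= add1n.
    move=> k; have := E k; have := E2 k; have := c1 k; lia.
Qed.

Lemma build_lemma (s : nat) : 0 < s -> forall (n : nat) (P : {set {set 'I_n}}), part P ->
  s <= cnt P 1 -> exists Q m, [/\ part Q, chain P Q m &
    forall k, cnt Q k + (1 == k) * s = cnt P k + (s == k)].
Proof.
elim: s => [//|s IH] _ n P HP Hs.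
case: s IH Hs => [|s] IH Hs.
  exists P, 0; split => //; first exact: chain0.
  by move=> k; rewrite muln1.
have [Q1 [m1 [HQ1 HC1 E1]]] := IH (ltac:(done)) n P HP (ltac:(lia)).
have a1 : 1 + (s.+1 == 1) <= cnt Q1 s.+1.
  have := E1 s.+1; have := E1 1; move: Hs; case: s {IH E1 HC1} => [|s]; rewrite ?muln1 /=; lia.
have a2 : 0 < cnt Q1 1.
  have := E1 1; rewrite mul1n; lia.
have [A [B [HA HB HAB cA cB]]] := cnt_ex2 a1 a2.
have [Q [HC HQ E]] := move_chain (x := s.+1) (y := 1) HQ1 HA HB HAB
  (ltac:(rewrite cA; lia)) (ltac:(rewrite cB; lia)) (ltac:(rewrite cA; lia)) (ltac:(rewrite cB; lia)).
exists Q, (m1 + 1); split => //; first exact: chain_trans HC1 HC.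
move=> k; have := E k; have := E1 k; rewrite cA cB !subnn /= addn1.
case: (1 == k) => /=; rewrite ?mul1n ?mul0n; lia.
Qed.

Fixpoint tri (c : nat) : nat := if c is c'.+1 then tri c' + c else 0.

Lemma kernel_lemma (c : nat) : 0 < c -> forall (n : nat) (P : {set {set 'I_n}}) r, part P ->
  tri c + r <= cnt P 1 -> exists Q m, [/\ part Q, chain P Q m,
    (forall k, 1 < k <= c -> 0 < cnt Q k) & r < cnt Q 1].
Proof.
elim: c => [//|c IH] _ n P r HP Hr.
case: c IH Hr => [|c] IH Hr.
  exists P, 0; split => //; first exact: chain0.
    by move=> k; lia.
have [Q1 [m1 [HQ1 HC1 K1 R1]]] := IH (ltac:(done)) n P (r + c.+2) HP (ltac:(have t2 : tri c.+2 = tri c.+1 + c.+2 by []; move: Hr; rewrite t2; lia)).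
have [Q [m2 [HQ HC E]]] := build_lemma (ltac:(done) : 0 < c.+2) HQ1 (ltac:(lia)).
exists Q, (m1 + m2); split => //; first exact: chain_trans HC1 HC.
  move=> k hk; have := E k; case: (eqVneq k c.+2) => [->|nk].
    lia.
  have := K1 k; have k1 : (1 == k) = false by lia.
  rewrite k1 mul0n; lia.
have := E 1; rewrite mul1n /=; lia.
Qed.

Definition P0 (n : nat) : {set {set 'I_n}} := [set [set z] | z : 'I_n].

Lemma part_P0 (n : nat) : part (P0 n).
Proof.
apply/and3P; split.
- apply/eqP/setP => z; rewrite inE; apply/bigcupP; exists [set z]; last by rewrite inE.
  by apply/imsetP; exists z.
- apply/trivIsetP => A B /imsetP [a _ ->] /imsetP [b _ ->] N.
  rewrite -setI_eq0; apply/eqP/setP => z; rewrite !inE.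
  apply/negbTE/negP => /andP [/eqP za /eqP zb]; move: N; by rewrite -za -zb eqxx.
- apply/imsetP => [[z _ E]]; have : z \in [set z] by rewrite inE.
  by rewrite -E inE.
Qed.

Lemma cnt_P0 (n : nat) : cnt (P0 n) 1 = n.
Proof.
rewrite /cnt /P0 big_imset /=; last by move=> a b _ _; apply: set1_inj.
rewrite (eq_bigr (fun _ => 1)); last by move=> z _; rewrite cards1.
by rewrite sum1_card card_ord.
Qed.

Lemma U_mono (i : nat) : U i <= U i.+1.
Proof. case: i => [//|i]; have E : U i.+2 = (U i + U i.+1).+1 by []. rewrite E; lia. Qed.

Lemma U_ge (j : nat) : 2 ^ j <= (U (2 * j)).+1.
Proof.
elim: j => [//|j IH].
have -> : 2 * j.+1 = (2 * j).+2 by lia.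
have E : U (2 * j).+2 = (U (2 * j) + U (2 * j).+1).+1 by [].
rewrite E expnS; have := U_mono (2 * j); lia.
Qed.

Lemma tri2 (c : nat) : tri c * 2 = c * c.+1.
Proof. elim: c => [//|c IH] /=; lia. Qed.

Lemma INR_exp2 (j : nat) : INR (2 ^ j) = pow (INR 2) j.
Proof.
elim: j => [//|j IH]; rewrite expnS -multE mult_INR IH; reflexivity.
Qed.

Lemma U_pos (i : nat) : 0 < i -> 0 < U i.
Proof. by case: i => [|[|i]]. Qed.


Local Open Scope R_scope.
Lemma real_part (n j m : nat) : (n <= 4 * j * j)%N -> (2 ^ j <= 2 * m)%N ->
  Rle (Rmult (Rinv 2) (Rpower 2 (Rdiv (sqrt (INR n)) 2))) (INR m).
Proof.
move=> hn hm.
have e2 : INR 2 = 2 by simpl; lra.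
have hnR : INR n <= (2 * INR j) * (2 * INR j).
  have := le_INR _ _ (ssrnat.leP hn); rewrite !mult_INR => h.
  have e4 : INR 4 = 4 by simpl; lra.
  rewrite e4 in h; lra.
have j0 : 0 <= INR j by apply: pos_INR.
have s1 : sqrt (INR n) <= 2 * INR j.
  rewrite -(sqrt_square (2 * INR j)); last lra.
  exact: sqrt_le_1_alt.
have s2 : sqrt (INR n) / 2 <= INR j by unfold Rdiv; lra.
have s3 := Rle_Rpower 2 _ _ (ltac:(lra)) s2.
rewrite Rpower_pow in s3; last lra.
have hmR : INR (2 ^ j) <= 2 * INR m.
  have := le_INR _ _ (ssrnat.leP hm); rewrite mult_INR e2; done.
rewrite INR_exp2 e2 in hmR.
lra.
Qed.
Local Close Scope R_scope.

Theorem mainTheorem4 :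
  forall k : nat, 2 <= k ->
  exists c : R, Rlt 0 c /\
  forall N : nat, exists (n d : nat) (pos : 'I_n -> proposal d)
    (f : nat -> {set coalition n d}) (m : nat),
    N <= n /\
    is_coalition_structure pos (f 0) /\
    (forall i, i < m -> is_coalition_structure pos (f i) /\
                        k_compromise_step pos k (f i) (f i.+1)) /\
    Rle (Rmult c (Rpower 2 (Rdiv (sqrt (INR n)) 2))) (INR m).
Proof.
move=> k hk.
exists (Rinv 2); split; first exact: (Rinv_0_lt_compat _ Rlt_0_2).
move=> N.
pose j := N.+2; pose c := 2 * j; pose n := tri c + c.
have c0 : 0 < c by rewrite /c; lia.
have [Q1 [m1 [HQ1 HC1 K1 R1]]] := kernel_lemma c0 (r := c) (part_P0 n) (ltac:(by rewrite cnt_P0)).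
have [Q2 [m2 [HQ2 HC2 E2]]] := build_lemma c0 HQ1 (ltac:(lia)).
have c2 : 1 < c by rewrite /c; lia.
have b1 : forall k, 0 < k <= c -> 0 < cnt Q2 k.
  move=> k' hk'; have := E2 k'; case: (eqVneq k' 1) => [->|nk].
    rewrite mul1n; move: R1 c2; clear; lia.
  have := K1 k'; have e1 : (1 == k') = false by lia.
  rewrite ?e1 /= ?mul0n; move: hk' nk; clear; lia.
have b2 : 1 < cnt Q2 c.
  have := E2 c; have := K1 c; have e1 : (1 == c) = false by lia.
  rewrite ?e1 /= ?mul0n ?eqxx; move: c2; clear; lia.
have [Q3 [HQ3 HC3 E3]] := up_lemma c0 HQ2 b1 b2.
have [g [g0 gm Hg]] := chain_trans (chain_trans HC1 HC2) HC3.
pose m := m1 + m2 + U c.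
exists n, 1, (@posT n), (fun i => CSof (g i)), m.
have hn : n <= 4 * j * j.
  have := tri2 c; rewrite /n /c /j; clear; nia.
have hm : 2 ^ j <= 2 * m.
  have := U_ge j; have := U_pos c0; rewrite /m /c; clear; lia.
split; [|split; [|split]].
- rewrite /n /c /j; clear; lia.
- rewrite /= g0; exact: CSof_cs (part_P0 n).
- move=> i hi; have [Hp Hs] := Hg i hi; split; [exact: CSof_cs | exact: step_kc].
- exact: real_part hn hm.
Qed.
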